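(* Let $G$ be a finite simple graph and $k\ge 0$ an integer. If $Z_k(G)\le k$, then $Z_k(G)=Z(G)$.
   Context: Filling rule: if a filled vertex has exactly one unfilled neighbor (and any number of filled neighbors), that neighbor becomes filled; ''applying the filling rule in a subgraph $H$'' means applying it with neighborhoods taken in $H$. The $Z_q$-Game on $G$ ($q\ge 0$ an integer): initially all vertices are unfilled; a player repeatedly performs one of the following operations until all vertices are filled: (1) for one token, change any vertex from unfilled to filled; (2) at no cost, apply the filling rule in $G$; (3) if $F$ is the current set of filled vertices and $U_1,\dots,U_k$ are the vertex sets of the connected components of $G[V(G)\setminus F]$ with $k\ge q+1$, the player announces a selection of at least $q+1$ of the $U_i$ to an oracle (an adversary), the oracle returns a nonempty subset $\{U_{i_1},\dots,U_{i_\ell}\}$ of the selected components, and the player may at no cost apply the filling rule in $G[F\cup U_{i_1}\cup\cdots\cup U_{i_\ell}]$. $Z_q(G)$ is the minimum number of tokens with which the player can guarantee that all vertices become filled, regardless of the oracle's responses. The $Z$-Game is the same game with only operations (1) and (2) allowed, and $Z(G)$ (the zero forcing number) is the minimum number of tokens needed there to fill all vertices. *)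

(* Defs.v *)
From mathcomp Require Import all_boot.
Set Implicit Arguments. Unset Strict Implicit. Unset Printing Implicit Defensive.

(* A finite simple graph: vertex type T : finType, adjacency e : rel T,
   assumed symmetric and irreflexive in the theorem statement. *)

Section ZGames.
Variables (T : finType) (e : rel T).

(* Filling rule applied in the induced subgraph G[H] with current filled
   set F: filled vertex u in H whose only unfilled neighbour in G[H] is w;
   then w becomes filled. *)
Definition fill_step (H F : {set T}) (u w : T) : Prop :=
  [/\ u \in H, u \in F, w \in H, w \notin F & e u w] /\
  (forall x, x \in H -> e u x -> x != w -> x \in F).

Definition unfilled_adj (F : {set T}) : rel T :=
  fun x y => [&& e x y, x \notin F & y \notin F].

Definition components (F : {set T}) : {set {set T}} :=
  [set [set y | connect (unfilled_adj F) x y] | x in ~: F].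

(* zq_win q t F : starting from filled set F, the player can guarantee
   filling all vertices using at most t further tokens in the Z_q-Game. *)
Inductive zq_win (q : nat) : nat -> {set T} -> Prop :=
| zq_done t F : F = setT -> zq_win q t F
| zq_token t F v : zq_win q t (v |: F) -> zq_win q t.+1 F
| zq_force t F u w : fill_step setT F u w -> zq_win q t (w |: F) -> zq_win q t F
| zq_oracle t F (S : {set {set T}}) :
    S \subset components F -> q.+1 <= #|S| ->
    (forall R : {set {set T}}, R \subset S -> R != set0 ->
       zq_win q t F \/
       exists u w, fill_step (F :|: \bigcup_(U in R) U) F u w /\
                   zq_win q t (w |: F)) ->
    zq_win q t F.

Inductive z_win : nat -> {set T} -> Prop :=
| z_done t F : F = setT -> z_win t F
| z_token t F v : z_win t (v |: F) -> z_win t.+1 F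
| z_force t F u w : fill_step setT F u w -> z_win t (w |: F) -> z_win t F.

Definition is_Zq (q n : nat) : Prop :=
  zq_win q n set0 /\ forall m, zq_win q m set0 -> n <= m.

Definition is_Z (n : nat) : Prop :=
  z_win n set0 /\ forall m, z_win m set0 -> n <= m.

End ZGames.

(* Main.v *)
Require Import Defs.
From mathcomp Require Import all_boot.
From mathcomp Require Import zify.
Set Implicit Arguments. Unset Strict Implicit. Unset Printing Implicit Defensive.

Section Aux.
Variables (T : finType) (e : rel T) (q : nat).

Section Ind.
Variable (P : nat -> {set T} -> Prop).
Hypothesis Hd : forall t F, F = setT -> P t F.
Hypothesis Ht : forall t F v, zq_win e q t (v |: F) -> P t (v |: F) -> P t.+1 F.
Hypothesis Hf : forall t F u w, fill_step e setT F u w -> zq_win e q t (w |: F) ->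
  P t (w |: F) -> P t F.
Hypothesis Ho : forall t F (S : {set {set T}}), S \subset components e F -> q.+1 <= #|S| ->
  (forall R : {set {set T}}, R \subset S -> R != set0 ->
     P t F \/ exists u w, fill_step e (F :|: \bigcup_(U in R) U) F u w /\ P t (w |: F)) ->
  P t F.

Fixpoint zq_ind2 t F (h : zq_win e q t F) {struct h} : P t F :=
  match h in @zq_win _ _ _ t F return P t F with
  | zq_done t F h1 => Hd t h1
  | zq_token t F v h1 => Ht h1 (zq_ind2 h1)
  | zq_force t F u w h1 h2 => Hf h1 h2 (zq_ind2 h2)
  | zq_oracle t F SS h1 h2 h3 => Ho h1 h2 (fun R hR hne =>
      match h3 R hR hne with
      | or_introl h => or_introl (zq_ind2 h)
      | or_intror (ex_intro u (ex_intro w (conj hf hw))) =>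
          or_intror (ex_intro _ u (ex_intro _ w (conj hf (zq_ind2 hw))))
      end)
  end.
End Ind.

Definition active (F : {set T}) := [set u in F | [exists x, e u x && (x \notin F)]].

Definition gS (F : {set T}) (S : {set {set T}}) :=
  [set u in F | [exists x, [&& x \in \bigcup_(U in S) U, x \notin F & e u x]]].

Lemma gS_active F S : gS F S \subset active F.
Proof.
apply/subsetP => u; rewrite !inE => /andP[uF /existsP[x /and3P[_ xF eux]]].
by rewrite uF; apply/existsP; exists x; rewrite eux xF.
Qed.

Lemma count_lemma (F : {set T}) (P : Prop) : forall n (S : {set {set T}}), #|S| = n ->
  (forall U V, U \in S -> V \in S -> forall x, x \in U -> x \in V -> U = V) ->
  (forall R : {set {set T}}, R \subset S -> R != set0 ->
     P \/ exists u w, fill_step e (F :|: \bigcup_(U in R) U) F u w) ->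
  P \/ #|S| <= #|gS F S|.
Proof.
elim=> [|n IH] S cS Hdis H; first by right; rewrite cS.
have S0 : S != set0 by apply/eqP => S0; rewrite S0 cards0 in cS.
case: (H S (subxx S) S0) => [p|[u0 [w0 [[_ u0F w0H w0F eu0w0] Hu0]]]]; first by left.
have : w0 \in \bigcup_(U in S) U by move: w0H; rewrite inE (negbTE w0F).
case/bigcupP => U0 U0S w0U0.
have cS' : #|S :\ U0| = n by move: cS; rewrite (cardsD1 U0) U0S => -[].
case: (IH (S :\ U0) cS').
- by move=> U V /setD1P[_ US] /setD1P[_ VS]; apply: Hdis.
- move=> R RS R0; apply: H => //; apply: subset_trans RS _; exact: subsetDl.
- by left.
move=> le; right.
have u0g : u0 \in gS F S.
  rewrite inE u0F; apply/existsP; exists w0; apply/and3P; split => //; apply/bigcupP; by exists U0.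
have sub : gS F (S :\ U0) \subset gS F S :\ u0.
  apply/subsetP => u; rewrite inE => /andP[uF /existsP[x /and3P[xS xF eux]]].
  move: xS => /bigcupP[V /setD1P[VU0 VS] xV].
  apply/setD1P; split.
    apply/eqP => uu0; subst u.
    have xw : x = w0.
      apply/eqP; apply: contraNT xF => xw; apply: (Hu0 x) => //.
      by rewrite inE; apply/orP; right; apply/bigcupP; exists V.
    by subst x; move: VU0; rewrite (Hdis V U0 VS U0S w0) ?eqxx.
  rewrite inE uF; apply/existsP; exists x; apply/and3P; split => //; apply/bigcupP; by exists V.
have := subset_leq_card sub; rewrite (cardsD1 u0 (gS F S)) u0g (cardsD1 U0 S) U0S.
move: le; rewrite cS'; lia.
Qed.

Hypothesis e_sym : symmetric e.

Lemma comp_disj F U V : U \in components e F -> V \in components e F ->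
  forall x, x \in U -> x \in V -> U = V.
Proof.
have sym : connect_sym (unfilled_adj e F).
  apply: sym_connect_sym => x y; rewrite /unfilled_adj e_sym.
  by case: (x \notin F); case: (y \notin F); rewrite ?andbF ?andbT.
move=> /imsetP[a _ ->] /imsetP[b _ ->] x; rewrite !inE => ax bx.
apply/setP => y; rewrite !inE.
by rewrite (same_connect sym ax) (same_connect sym bx).
Qed.

Lemma z_to_zq t F : z_win e t F -> zq_win e q t F.
Proof.
elim=> {t F} [t F ->|t F v _ IH|t F u w fs _ IH].
- exact: zq_done.
- exact: zq_token IH.
- exact: zq_force fs IH.
Qed.

Lemma zq_to_z t F : zq_win e q t F ->
  forall s, #|active F| <= s -> s + t <= q -> z_win e t F.
Proof.
elim/zq_ind2 => {t F}.
- by move=> t F -> s _ _; exact: z_done.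
- move=> t F v _ IH s hs hst; apply: z_token; apply: (IH s.+1) => //; last lia.
  have sub : active (v |: F) \subset v |: active F.
    apply/subsetP => u; rewrite !inE => /andP[/orP[->//|uF] /existsP[x /andP[eux]]].
    rewrite inE negb_or => /andP[_ xF].
    by apply/orP; right; rewrite uF; apply/existsP; exists x; rewrite eux xF.
  have := subset_leq_card sub; have := cardsU1 v (active F); lia.
- move=> t F u w fs _ IH s hs hst; apply: (z_force fs) (IH s _ hst).
  case: fs => [[_ uF _ wF euw] Hu].
  have ua : u \in active F by rewrite inE uF; apply/existsP; exists w; rewrite euw wF.
  have sub : active (w |: F) \subset w |: (active F :\ u).
    apply/subsetP => y; rewrite !inE => /andP[/orP[->//|yF] /existsP[x /andP[eyx]]].
    rewrite inE negb_or => /andP[xw xF].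
    apply/orP; right; apply/andP; split.
      apply/eqP => yu; subst y; move: xF; rewrite (Hu x) ?in_setT //; by move: xw; rewrite inE.
    by rewrite yF; apply/existsP; exists x; rewrite eyx xF.
  have := subset_leq_card sub; have := cardsU1 w (active F :\ u).
  have := cardsD1 u (active F); rewrite ua; lia.
- move=> t F S Ssub cS H s hs hst.
  have H' : forall R : {set {set T}}, R \subset S -> R != set0 ->
      z_win e t F \/ exists u w, fill_step e (F :|: \bigcup_(U in R) U) F u w.
    move=> R RS R0; case: (H R RS R0) => [p|[u [w [fs _]]]].
      by left; apply: (p s).
    by right; exists u, w.
  case: (count_lemma (erefl #|S|) _ H') => // [U V US VS|le].
    by apply: comp_disj; apply: (subsetP Ssub).
  have := subset_leq_card (gS_active F S); lia.
Qed.

End Aux.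

Theorem theorem2p2 (T : finType) (e : rel T) (e_sym : symmetric e)
  (e_irr : irreflexive e) (k zk z : nat) :
  is_Zq e k zk -> is_Z e z -> zk <= k -> zk = z.
Proof.
move=> [hzk minzk] [hz minz] le.
have h1 : zk <= z by apply: minzk; apply: z_to_zq.
have h2 : z <= zk.
  apply: minz; apply: (zq_to_z e_sym hzk (s := 0)) => //.
  by rewrite leqn0 cards_eq0; apply/eqP/setP => u; rewrite !inE.
by apply/eqP; rewrite eqn_leq h1 h2.
Qed.
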